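(* Let $0<\varepsilon\le 0.1$, let $\Box$ be a closed axis-parallel square of side length $\varepsilon$ with center $o$, and let $R\subseteq\Box$ be a nonempty circular domain. For every non-vertex point $p\in\partial(R\oplus D)$, $\big|\mathsf{ang}(\overrightarrow{op},\mathsf{tan}_p)-\tfrac{\pi}{2}\big|\le 4\varepsilon$.
   Context: A circular arc is a connected portion of a circle in $\mathbb{R}^2$ (segments included). A circular domain is a closed subset of $\mathbb{R}^2$ whose boundary consists of finitely many circular arcs intersecting only at their endpoints (finite point sets are also allowed). $D$ is the closed unit disk centered at the origin and $\oplus$ denotes Minkowski sum. $\partial(R\oplus D)$ is a simple closed curve consisting of circular arcs, and each ray from $o$ meets it exactly once. A non-vertex point of $\partial(R\oplus D)$ is a point in the relative interior of one of its boundary arcs; at such a point $p$ the tangent line is unique, and the clockwise tangent $\mathsf{tan}_p$ is the unit vector along this tangent line such that moving $p$ along $\partial(R\oplus D)$ in direction $\mathsf{tan}_p$ rotates $\overrightarrow{op}$ clockwise. For nonzero vectors $\vec u,\vec v$, $\mathsf{ang}(\vec u,\vec v)\in[0,2\pi)$ is the clockwise ordered angle from $\vec u$ to $\vec v$ (the angle swept when rotating $\vec u$ clockwise until it points in the direction of $\vec v$). *)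

(* Defs.v *)
From Stdlib Require Import Reals Lra List.
Open Scope R_scope.

Definition pt := (R * R)%type.
Definition padd (p q : pt) : pt := (fst p + fst q, snd p + snd q).
Definition psub (p q : pt) : pt := (fst p - fst q, snd p - snd q).
Definition pscal (k : R) (p : pt) : pt := (k * fst p, k * snd p).
Definition pnorm (p : pt) : R := sqrt (fst p ^ 2 + snd p ^ 2).
(* cross u v > 0 iff v points counterclockwise from u *)
Definition cross (u v : pt) : R := fst u * snd v - snd u * fst v.

(* CArc c r t1 t2 : points c + r (cos t, sin t), t in [t1,t2];
   Seg a b       : points a + t (b - a),       t in [0,1]. *)
Inductive arc := CArc (c : pt) (r t1 t2 : R) | Seg (a b : pt).

Definition arc_wf (A : arc) : Prop :=
  match A with
  | CArc _ r t1 t2 => 0 < r /\ t1 < t2 /\ t2 - t1 <= 2 * PI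
  | Seg a b => a <> b
  end.

Definition arc_lo (A : arc) : R := match A with CArc _ _ t1 _ => t1 | Seg _ _ => 0 end.
Definition arc_hi (A : arc) : R := match A with CArc _ _ _ t2 => t2 | Seg _ _ => 1 end.

Definition arc_pt (A : arc) (t : R) : pt :=
  match A with
  | CArc c r _ _ => padd c (r * cos t, r * sin t)
  | Seg a b => padd a (pscal t (psub b a))
  end.

Definition arc_dir (A : arc) (t : R) : pt :=
  match A with
  | CArc _ _ _ _ => (- sin t, cos t)
  | Seg a b => pscal (/ pnorm (psub b a)) (psub b a)
  end.

Definition on_arc (A : arc) (p : pt) : Prop :=
  exists t, arc_lo A <= t <= arc_hi A /\ p = arc_pt A t.

Definition arc_endpoint (A : arc) (p : pt) : Prop :=
  p = arc_pt A (arc_lo A) \/ p = arc_pt A (arc_hi A).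

Definition is_closed (S : pt -> Prop) : Prop :=
  forall p, (forall e, 0 < e -> exists q, S q /\ pnorm (psub q p) < e) -> S p.

Definition boundary (S : pt -> Prop) (p : pt) : Prop :=
  (forall e, 0 < e -> exists q, S q /\ pnorm (psub q p) < e) /\
  (forall e, 0 < e -> exists q, ~ S q /\ pnorm (psub q p) < e).

Definition circular_domain (S : pt -> Prop) : Prop :=
  is_closed S /\
  exists (arcs : list arc) (pts : list pt),
    Forall arc_wf arcs /\
    (forall p, boundary S p <-> ((exists A, In A arcs /\ on_arc A p) \/ In p pts)) /\
    (forall i j, (i < length arcs)%nat -> (j < length arcs)%nat -> i <> j ->
       forall p, on_arc (nth i arcs (Seg (0,0) (0,0))) p ->
                 on_arc (nth j arcs (Seg (0,0) (0,0))) p ->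
                 arc_endpoint (nth i arcs (Seg (0,0) (0,0))) p /\
                 arc_endpoint (nth j arcs (Seg (0,0) (0,0))) p).

Definition in_square (o : pt) (eps : R) (p : pt) : Prop :=
  Rabs (fst p - fst o) <= eps / 2 /\ Rabs (snd p - snd o) <= eps / 2.

Definition mink_D (S : pt -> Prop) (p : pt) : Prop :=
  exists r d, S r /\ pnorm d <= 1 /\ p = padd r d.

Definition tangent_unit (S : pt -> Prop) (p u : pt) : Prop :=
  exists A t,
    arc_wf A /\
    (forall s, arc_lo A <= s <= arc_hi A -> boundary S (arc_pt A s)) /\
    arc_lo A < t < arc_hi A /\ p = arc_pt A t /\
    (u = arc_dir A t \/ u = pscal (-1) (arc_dir A t)).

Definition non_vertex (S : pt -> Prop) (p : pt) : Prop :=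
  exists u, tangent_unit S p u.

Definition rotates_cw (o p u : pt) : Prop := cross (psub p o) u < 0.

Definition is_cw_ang (u v : pt) (th : R) : Prop :=
  u <> (0, 0) /\ v <> (0, 0) /\ 0 <= th < 2 * PI /\
  let a := pscal (/ pnorm u) u in
  let b := pscal (/ pnorm v) v in
  b = (fst a * cos th + snd a * sin th, - fst a * sin th + snd a * cos th).

(* Main.v *)
Require Import Defs.
From Stdlib Require Import Reals Lra Psatz.
Open Scope R_scope.

Definition dot (u v : pt) : R := fst u * fst v + snd u * snd v.
Definition nsq (u : pt) : R := fst u ^ 2 + snd u ^ 2.

Lemma nsq_ge0 u : 0 <= nsq u.
Proof. unfold nsq; nra. Qed.

Lemma pnorm_ge0 u : 0 <= pnorm u.
Proof. unfold pnorm; apply sqrt_pos. Qed.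

Lemma pnorm_sq u : pnorm u * pnorm u = nsq u.
Proof. unfold pnorm, nsq; apply sqrt_sqrt; nra. Qed.

Lemma lagrange u v : cross u v ^ 2 + dot u v ^ 2 = nsq u * nsq v.
Proof. unfold cross, dot, nsq; ring. Qed.

Lemma cs u v : dot u v ^ 2 <= nsq u * nsq v.
Proof. rewrite <- lagrange. nra. Qed.

Lemma pnorm_lt_nsq u e : pnorm u < e -> nsq u < e * e.
Proof. intros H. pose proof (pnorm_sq u). pose proof (pnorm_ge0 u). nra. Qed.

Lemma nsq_le1_pnorm u : nsq u <= 1 -> pnorm u <= 1.
Proof. intros H. pose proof (pnorm_sq u). pose proof (pnorm_ge0 u). nra. Qed.

Lemma pnorm_le1_nsq u : pnorm u <= 1 -> nsq u <= 1.
Proof. intros H. pose proof (pnorm_sq u). pose proof (pnorm_ge0 u). nra. Qed.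

Lemma abs_le_of_sq x k : 0 <= k -> x ^ 2 <= k ^ 2 -> Rabs x <= k.
Proof. intros. unfold Rabs; destruct (Rcase_abs x); nra. Qed.

Lemma F1 Rg x q : boundary (mink_D Rg) x -> Rg q -> 1 <= nsq (psub x q).
Proof.
  intros [_ Hb] Hq.
  destruct (Rle_lt_dec 1 (nsq (psub x q))) as [h|h]; [exact h|exfalso].
  set (k := nsq (psub x q)) in *.
  assert (k0 : 0 <= k) by apply nsq_ge0.
  destruct (Hb ((1 - k)/4)) as [y [Hy Hyx]]; [lra|].
  apply Hy. exists q, (psub y q). split; [exact Hq|]. split.
  - apply nsq_le1_pnorm.
    apply pnorm_lt_nsq in Hyx.
    pose proof (cs (psub y x) (psub x q)) as C.
    set (e := (1-k)/4) in *.
    assert (Hd: Rabs (dot (psub y x) (psub x q)) <= e).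
    { apply abs_le_of_sq; [unfold e; lra|].
      fold k in C. pose proof (nsq_ge0 (psub y x)). nra. }
    assert (E: nsq (psub y q) = nsq (psub y x) + 2 * dot (psub y x) (psub x q) + k).
    { unfold k, nsq, dot, psub; simpl; ring. }
    rewrite E. pose proof (Rle_abs (dot (psub y x) (psub x q))).
    assert (e * e <= e / 4) by (unfold e; nra).
    unfold e in *. lra.
  - unfold padd, psub; destruct y; simpl; f_equal; ring.
Qed.

Lemma F2 Rg p d : boundary (mink_D Rg) p -> 0 < d <= 1 ->
  exists q, Rg q /\ nsq (psub p q) <= 1 + d.
Proof.
  intros [Hb _] Hd.
  destruct (Hb (d/3)) as [y [[q [w [Hq [Hw Hy]]]] Hyp]]; [lra|].
  exists q; split; [exact Hq|].
  apply pnorm_lt_nsq in Hyp. apply pnorm_le1_nsq in Hw.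
  assert (E: psub p q = padd (psub p y) w).
  { subst y. unfold padd, psub; simpl; f_equal; ring. }
  rewrite E.
  assert (Hn: nsq (psub p y) = nsq (psub y p)) by (unfold nsq, psub; simpl; ring).
  pose proof (cs (psub p y) w) as C.
  assert (Hdd: Rabs (dot (psub p y) w) <= d/3).
  { apply abs_le_of_sq; [lra|]. pose proof (nsq_ge0 w). pose proof (nsq_ge0 (psub p y)). nra. }
  assert (E2: nsq (padd (psub p y) w) = nsq (psub p y) + 2 * dot (psub p y) w + nsq w)
    by (unfold nsq, dot, padd; simpl; ring).
  rewrite E2. pose proof (Rle_abs (dot (psub p y) w)). nra.
Qed.

Lemma key_scalar N dU dW B C d : 0 < B -> Rabs dW <= 2 -> N <= 1 + d ->
  1 <= N + 2*B*dU + 2*C*dW + B^2 + C^2 ->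
  1 <= N - 2*B*dU + 2*C*dW + B^2 + C^2 ->
  2*B*Rabs dU <= d + 4*Rabs C + B^2 + C^2.
Proof.
  intros HB HW HN H1 H2.
  assert (C*dW <= 2*Rabs C).
  { pose proof (Rabs_pos C). unfold Rabs in *; destruct (Rcase_abs C), (Rcase_abs dW); nra. }
  unfold Rabs at 1; destruct (Rcase_abs dU); nra.
Qed.

Lemma dir_unit A t : arc_wf A -> nsq (arc_dir A t) = 1.
Proof.
  destruct A as [c r t1 t2 | a b]; simpl; intros W.
  - unfold nsq; simpl. pose proof (sin2_cos2 t). unfold Rsqr in *. nra.
  - unfold nsq, pscal; simpl.
    assert (Hp : 0 < pnorm (psub b a)).
    { pose proof (pnorm_ge0 (psub b a)). destruct H; [auto|].
      exfalso. apply W. pose proof (pnorm_sq (psub b a)). rewrite <- H in H0.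
      unfold nsq, psub in H0; simpl in H0. destruct a as [a1 a2], b as [b1 b2]; simpl in *.
      assert (E1: (b1 - a1)^2 = 0) by (pose proof (pow2_ge_0 (b1-a1)); pose proof (pow2_ge_0 (b2-a2)); lra). assert (E2: (b2 - a2)^2 = 0) by (pose proof (pow2_ge_0 (b1-a1)); pose proof (pow2_ge_0 (b2-a2)); lra).
      assert (b1 - a1 = 0) by (destruct (Req_dec (b1-a1) 0); auto; exfalso; eapply pow_nonzero; eauto). assert (b2 - a2 = 0) by (destruct (Req_dec (b2-a2) 0); auto; exfalso; eapply pow_nonzero; eauto). f_equal; lra. }
    pose proof (pnorm_sq (psub b a)). unfold nsq in H.
    set (L := pnorm (psub b a)) in *. unfold psub in *; cbn [fst snd] in *.
    transitivity (((fst b - fst a)^2 + (snd b - snd a)^2) * / (L*L)); [field; lra|].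
    rewrite <- H. field. lra.
Qed.

Lemma arc_control_C c r t1 t2 t0 eta : arc_wf (CArc c r t1 t2) -> t1 < t0 < t2 -> 0 < eta ->
  exists d, 0 < d <= 1 /\ forall q,
    (forall s, t1 <= s <= t2 -> 1 <= nsq (psub (arc_pt (CArc c r t1 t2) s) q)) ->
    nsq (psub (arc_pt (CArc c r t1 t2) t0) q) <= 1 + d ->
    Rabs (dot (psub (arc_pt (CArc c r t1 t2) t0) q) (arc_dir (CArc c r t1 t2) t0)) <= eta.
Proof.
  intros [Hr [Ht _]] Ht0 He.
  pose proof PI2_3_2 as HPI.
  set (x := Rmin (Rmin ((t0-t1)/2) ((t2-t0)/2)) (Rmin (1/2) (eta/(4*(2+r))))).
  assert (Hx : 0 < x /\ x <= (t0-t1)/2 /\ x <= (t2-t0)/2 /\ x <= 1/2 /\ x <= eta/(4*(2+r))).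
  { unfold x. assert (0 < eta/(4*(2+r))) by (apply Rdiv_lt_0_compat; lra).
    pose proof (Rmin_l (Rmin ((t0-t1)/2) ((t2-t0)/2)) (Rmin (1/2) (eta/(4*(2+r))))).
    pose proof (Rmin_r (Rmin ((t0-t1)/2) ((t2-t0)/2)) (Rmin (1/2) (eta/(4*(2+r))))).
    pose proof (Rmin_l ((t0-t1)/2) ((t2-t0)/2)). pose proof (Rmin_r ((t0-t1)/2) ((t2-t0)/2)).
    pose proof (Rmin_l (1/2) (eta/(4*(2+r)))). pose proof (Rmin_r (1/2) (eta/(4*(2+r)))).
    repeat split; try lra.
    apply Rmin_glb_lt; apply Rmin_glb_lt; lra. }
  destruct Hx as (Hx0 & Hx1 & Hx2 & Hx3 & Hx4).
  set (sg := sin x). set (cg := cos x).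
  assert (Hsg : 0 < sg < x) by (split; [apply sin_gt_0|apply sin_lt_x]; lra).
  assert (Hcg0 : 0 < cg) by (apply cos_gt_0; lra).
  assert (Hsc : sg^2 + cg^2 = 1) by (pose proof (sin2_cos2 x); unfold Rsqr in *; fold sg cg in H; lra).
  assert (Hcg : 1/2 <= cg) by (assert (sg^2 <= 1/4) by nra; destruct (Rle_lt_dec (1/2) cg); [auto|nra]).
  set (B := 2*r*sg*cg). set (C := - 2*r*sg^2).
  assert (HB : 0 < B) by (unfold B; apply Rmult_lt_0_compat; [nra|lra]).
  exists (Rmin 1 (B*eta)). split.
  { split; [apply Rmin_glb_lt; [lra| nra]|apply Rmin_l]. }
  intros q Hq Hp.
  assert (Hd : Rmin 1 (B*eta) <= 1 /\ Rmin 1 (B*eta) <= B*eta)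
    by (split; [apply Rmin_l|apply Rmin_r]).
  set (d := Rmin 1 (B*eta)) in *.
  set (D := psub (arc_pt (CArc c r t1 t2) t0) q) in *.
  set (W := (cos t0, sin t0)).
  set (U := arc_dir (CArc c r t1 t2) t0).
  pose proof (sin2_cos2 t0) as Hst. unfold Rsqr in Hst.
  assert (EW : nsq W = 1) by (unfold nsq, W; simpl; lra).
  assert (HdW : Rabs (dot D W) <= 2).
  { apply abs_le_of_sq; [lra|]. pose proof (cs D W). rewrite EW in H. lra. }
  assert (Ep : forall sgn, sgn = 1 \/ sgn = -1 ->
     nsq (psub (arc_pt (CArc c r t1 t2) (t0 + sgn * (2*x))) q)
     = nsq D + 2*(sgn*B)*dot D U + 2*C*dot D W + B^2 + C^2).
  { intros sgn Hsgn.
    assert (Ec : cos (t0 + sgn*(2*x)) = cos t0 * (1 - 2*sg*sg) - sgn * sin t0 * (2*sg*cg)).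
    { destruct Hsgn as [-> | ->].
      - rewrite Rmult_1_l, cos_plus, cos_2a_sin, sin_2a. fold sg cg. ring.
      - replace (t0 + -1*(2*x)) with (t0 - 2*x) by ring.
        rewrite cos_minus, cos_2a_sin, sin_2a. fold sg cg. ring. }
    assert (Es : sin (t0 + sgn*(2*x)) = sin t0 * (1 - 2*sg*sg) + sgn * cos t0 * (2*sg*cg)).
    { destruct Hsgn as [-> | ->].
      - rewrite Rmult_1_l, sin_plus, cos_2a_sin, sin_2a. fold sg cg. ring.
      - replace (t0 + -1*(2*x)) with (t0 - 2*x) by ring.
        rewrite sin_minus, cos_2a_sin, sin_2a. fold sg cg. ring. }
    assert (Hs2 : sgn^2 = 1) by (destruct Hsgn as [-> | ->]; ring).
    unfold D, U, W, B, C, nsq, dot, psub, padd, arc_pt, arc_dir. cbn [fst snd].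
    rewrite Ec, Es.
    set (a1 := fst c - fst q). set (a2 := snd c - snd q).
    set (co := cos t0) in *. set (si := sin t0) in *.
    apply Rminus_diag_uniq.
    match goal with |- ?L - ?R = 0 => transitivity ((2*r*sg^2)^2*(co*co+si*si-1) + (2*r*sg*cg)^2*(sgn^2*(co*co+si*si)-1)) end.
    - unfold padd; cbn [fst snd]. ring.
    - rewrite Hs2. replace (co*co+si*si) with 1 by lra. ring. }
  pose proof (Hq (t0 + 1*(2*x)) ltac:(lra)) as Q1.
  pose proof (Hq (t0 + -1*(2*x)) ltac:(lra)) as Q2.
  rewrite Ep in Q1 by auto. rewrite Ep in Q2 by auto.
  assert (K := key_scalar (nsq D) (dot D U) (dot D W) B C d HB HdW Hp ltac:(lra) ltac:(lra)).
  assert (EC : Rabs C = 2*r*sg^2) by (unfold C; rewrite Rabs_left; [ring|]; assert (0 < r*sg^2) by (apply Rmult_lt_0_compat; nra); lra).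
  assert (EBC : B^2 + C^2 = 4*r^2*sg^2).
  { apply Rminus_diag_uniq. transitivity (4*r^2*sg^2*(sg^2+cg^2-1)); [unfold B, C; ring|]. rewrite Hsc; ring. }
  rewrite EC in K. replace (d + 4 * (2 * r * sg ^ 2) + B ^ 2 + C ^ 2) with (d + 4 * (2 * r * sg ^ 2) + 4*r^2*sg^2) in K by lra.
  assert (Hsgx : sg*(4+2*r) <= eta/2).
  { assert (sg*(4+2*r) <= x*(4+2*r)) by nra.
    assert (x*(4+2*r) <= eta/2).
    { apply Rmult_le_compat_r with (r := 4+2*r) in Hx4; [|lra].
      replace (eta / (4 * (2 + r)) * (4 + 2 * r)) with (eta/2) in Hx4 by (field; lra). lra. }
    lra. }
  assert (8*r*sg^2 + 4*r^2*sg^2 <= B*eta).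
  { unfold B. assert (0 < r*sg) by nra.
    assert (r*sg*(sg*(4+2*r)) <= r*sg*(eta/2)) by (apply Rmult_le_compat_l; lra).
    assert (r*sg*(eta/2) <= r*sg*(2*cg*eta/2)) by (apply Rmult_le_compat_l; nra).
    nra. }
  assert (2*B*Rabs (dot D U) <= 2*B*eta) by lra.
  nra.
Qed.

Lemma arc_control_S a b t0 eta : arc_wf (Seg a b) -> 0 < t0 < 1 -> 0 < eta ->
  exists d, 0 < d <= 1 /\ forall q,
    (forall s, 0 <= s <= 1 -> 1 <= nsq (psub (arc_pt (Seg a b) s) q)) ->
    nsq (psub (arc_pt (Seg a b) t0) q) <= 1 + d ->
    Rabs (dot (psub (arc_pt (Seg a b) t0) q) (arc_dir (Seg a b) t0)) <= eta.
Proof.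
  intros W Ht0 He.
  set (L := pnorm (psub b a)).
  assert (HLsq : L * L = nsq (psub b a)) by apply pnorm_sq.
  assert (HL : 0 < L).
  { pose proof (dir_unit (Seg a b) 0 W) as U1. simpl in U1.
    pose proof (pnorm_ge0 (psub b a)). fold L in H, U1. destruct H as [H|H]; [auto|].
    rewrite <- H in U1. unfold nsq, pscal in U1. simpl in U1. rewrite Rinv_0 in U1. lra. }
  set (h := Rmin (Rmin t0 (1-t0)) (eta/L)).
  assert (Hh : 0 < h /\ h <= t0 /\ h <= 1 - t0 /\ h <= eta/L).
  { unfold h. assert (0 < eta/L) by (apply Rdiv_lt_0_compat; lra).
    pose proof (Rmin_l (Rmin t0 (1-t0)) (eta/L)). pose proof (Rmin_r (Rmin t0 (1-t0)) (eta/L)).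
    pose proof (Rmin_l t0 (1-t0)). pose proof (Rmin_r t0 (1-t0)).
    repeat split; try lra. apply Rmin_glb_lt; [apply Rmin_glb_lt|]; lra. }
  destruct Hh as (Hh0 & Hh1 & Hh2 & Hh3).
  set (B := h * L).
  assert (HB : 0 < B) by (unfold B; nra).
  assert (HBe : B <= eta).
  { unfold B. apply Rmult_le_compat_r with (r := L) in Hh3; [|lra].
    replace (eta / L * L) with eta in Hh3 by (field; lra). lra. }
  exists (Rmin 1 (B*eta)). split.
  { split; [apply Rmin_glb_lt; [lra| nra]|apply Rmin_l]. }
  intros q Hq Hp.
  assert (Hd : Rmin 1 (B*eta) <= B*eta) by apply Rmin_r.
  set (d := Rmin 1 (B*eta)) in *.
  set (D := psub (arc_pt (Seg a b) t0) q) in *.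
  set (U := arc_dir (Seg a b) t0).
  assert (Ep : forall sgn, sgn = 1 \/ sgn = -1 ->
     nsq (psub (arc_pt (Seg a b) (t0 + sgn * h)) q)
     = nsq D + 2*(sgn*B)*dot D U + 2*0*0 + B^2 + 0^2).
  { intros sgn Hsgn.
    assert (Hs2 : sgn^2 = 1) by (destruct Hsgn as [-> | ->]; ring).
    unfold D, U, B, nsq, dot, psub, padd, pscal, arc_pt, arc_dir. fold L.
    unfold nsq, psub in HLsq. cbn [fst snd] in *.
    apply Rminus_diag_uniq.
    transitivity (h^2 * (sgn^2 * ((fst b - fst a) ^ 2 + (snd b - snd a) ^ 2) - L*L)).
    - unfold padd, pscal, psub; cbn [fst snd]. field. lra.
    - rewrite Hs2, HLsq. ring. }
  pose proof (Hq (t0 + 1*h) ltac:(lra)) as Q1.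
  pose proof (Hq (t0 + -1*h) ltac:(lra)) as Q2.
  rewrite Ep in Q1 by auto. rewrite Ep in Q2 by auto.
  assert (H0 : Rabs 0 <= 2) by (rewrite Rabs_R0; lra).
  assert (K := key_scalar (nsq D) (dot D U) 0 B 0 d HB H0 Hp ltac:(lra) ltac:(lra)).
  rewrite Rabs_R0 in K.
  assert (2*B*Rabs (dot D U) <= 2*B*eta) by nra.
  nra.
Qed.

Lemma arc_control A t0 eta : arc_wf A -> arc_lo A < t0 < arc_hi A -> 0 < eta ->
  exists d, 0 < d <= 1 /\ forall q,
    (forall s, arc_lo A <= s <= arc_hi A -> 1 <= nsq (psub (arc_pt A s) q)) ->
    nsq (psub (arc_pt A t0) q) <= 1 + d ->
    Rabs (dot (psub (arc_pt A t0) q) (arc_dir A t0)) <= eta.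
Proof.
  destruct A; simpl; intros.
  - apply arc_control_C; auto.
  - apply arc_control_S; auto.
Qed.

Lemma sq_bound eps o q : in_square o eps q -> nsq (psub q o) <= eps^2/2.
Proof.
  intros [H1 H2]. unfold nsq, psub; cbn [fst snd].
  rewrite <- (pow2_abs (fst q - fst o)), <- (pow2_abs (snd q - snd o)).
  pose proof (Rabs_pos (fst q - fst o)). pose proof (Rabs_pos (snd q - snd o)).
  nra.
Qed.

Lemma tangent_bound eps o Rg p u : 0 < eps <= 1/10 ->
  (forall r, Rg r -> in_square o eps r) ->
  tangent_unit (mink_D Rg) p u ->
  nsq u = 1 /\ Rabs (dot (psub p o) u) <= 17/20*eps.
Proof.
  intros He Hsq [A [t [W [Hbd [Ht [Hp Hu]]]]]].
  destruct (arc_control A t (eps/10) W Ht ltac:(lra)) as [d [Hd Hc]].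
  assert (Hpb : boundary (mink_D Rg) p) by (rewrite Hp; apply Hbd; lra).
  destruct (F2 Rg p d Hpb Hd) as [q [Hq Hpq]].
  assert (Hk : Rabs (dot (psub p q) (arc_dir A t)) <= eps/10).
  { rewrite Hp. apply Hc.
    - intros s Hs. apply F1 with Rg; auto.
    - rewrite <- Hp; auto. }
  set (U := arc_dir A t) in *.
  assert (HU : nsq U = 1) by (apply dir_unit; auto).
  pose proof (sq_bound eps o q (Hsq q Hq)) as Hqo.
  assert (Hk2 : Rabs (dot (psub q o) U) <= 3/4*eps).
  { apply abs_le_of_sq; [lra|]. pose proof (cs (psub q o) U). rewrite HU in H. nra. }
  assert (E : dot (psub p o) U = dot (psub p q) U + dot (psub q o) U)
    by (unfold dot, psub; cbn [fst snd]; ring).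
  assert (HB : Rabs (dot (psub p o) U) <= 17/20*eps).
  { rewrite E. eapply Rle_trans; [apply Rabs_triang|]. lra. }
  destruct Hu as [-> | ->]; auto.
  split.
  - rewrite <- HU. unfold nsq, pscal; cbn [fst snd]. ring.
  - replace (dot (psub p o) (pscal (-1) U)) with (- dot (psub p o) U)
      by (unfold dot, pscal; cbn [fst snd]; ring).
    rewrite Rabs_Ropp. auto.
Qed.

Lemma P_big eps o Rg p : 0 < eps <= 1/10 ->
  (forall r, Rg r -> in_square o eps r) ->
  boundary (mink_D Rg) p -> 4/5 <= nsq (psub p o).
Proof.
  intros He Hsq Hpb.
  destruct (F2 Rg p 1 Hpb ltac:(lra)) as [q [Hq Hpq]].
  pose proof (F1 Rg p q Hpb Hq) as H1.
  pose proof (sq_bound eps o q (Hsq q Hq)) as Hqo.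
  assert (E : nsq (psub p o) = nsq (psub p q) + 2 * dot (psub p q) (psub q o) + nsq (psub q o))
    by (unfold nsq, dot, psub; cbn [fst snd]; ring).
  assert (Hd : Rabs (dot (psub p q) (psub q o)) <= 1/10).
  { apply abs_le_of_sq; [lra|]. pose proof (cs (psub p q) (psub q o)).
    pose proof (nsq_ge0 (psub q o)). nra. }
  pose proof (Rle_abs (- dot (psub p q) (psub q o))). rewrite Rabs_Ropp in H.
  pose proof (nsq_ge0 (psub q o)). lra.
Qed.

Lemma sin4 eps : 0 < eps <= 1/10 -> eps < sin (4*eps).
Proof.
  intros He. pose proof PI2_3_2.
  destruct (sin_bound (4*eps) 0 ltac:(lra) ltac:(lra)) as [Hsb _].
  replace (sin_approx (4*eps) (2*0+1)) with (4*eps - (4*eps)^3/6) in Hsb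
    by (unfold sin_approx, sin_term; simpl; field).
  nra.
Qed.

Lemma asin_small c eps : 0 < eps <= 1/10 -> Rabs c <= eps -> Rabs (asin c) <= 4*eps.
Proof.
  intros He Hc. pose proof PI2_3_2. pose proof (sin4 eps He).
  assert (Hc1 : -1 <= c <= 1) by (unfold Rabs in Hc; destruct (Rcase_abs c); lra).
  pose proof (sin_asin c Hc1) as Hs. pose proof (asin_bound c) as Hb.
  assert (-eps <= c <= eps) by (unfold Rabs in Hc; destruct (Rcase_abs c); lra).
  unfold Rabs at 1; destruct (Rcase_abs (asin c)).
  - destruct (Rle_lt_dec (-(4*eps)) (asin c)); [lra|exfalso].
    assert (sin (asin c) < sin (-(4*eps))) by (apply sin_increasing_1; lra).
    rewrite sin_neg in H2. lra.
  - destruct (Rle_lt_dec (asin c) (4*eps)); [lra|exfalso].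
    assert (sin (4*eps) < sin (asin c)) by (apply sin_increasing_1; lra).
    lra.
Qed.

Lemma angle eps P u : 0 < eps <= 1/10 -> 4/5 <= nsq P -> nsq u = 1 ->
  Rabs (dot P u) <= 17/20*eps -> cross P u < 0 ->
  exists th, is_cw_ang P u th /\ Rabs (th - PI/2) <= 4*eps.
Proof.
  intros He HP Hu Hd Hx.
  pose proof (pnorm_sq P) as HnP. pose proof (pnorm_ge0 P) as HnP0.
  pose proof (pnorm_sq u) as Hnu. pose proof (pnorm_ge0 u) as Hnu0.
  set (nP := pnorm P) in *.
  assert (HnP1 : 17/20 <= nP) by nra.
  assert (Hu1 : pnorm u = 1) by nra.
  set (a := pscal (/nP) P).
  set (c := dot a u). set (s := - cross a u).
  assert (Ec : c * nP = dot P u) by (unfold c, a, dot, pscal; cbn [fst snd]; field; lra).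
  assert (Es : s * nP = - cross P u) by (unfold s, a, cross, pscal; cbn [fst snd]; field; lra).
  assert (Hs : 0 < s) by nra.
  assert (Ha : nsq a = 1).
  { transitivity (nsq P / (nP*nP)).
    - unfold a, nsq, pscal; cbn [fst snd]. field. lra.
    - rewrite <- HnP. field. lra. }
  assert (Hcs : c^2 + s^2 = 1).
  { pose proof (lagrange a u). rewrite Ha, Hu in H. unfold c, s. nra. }
  assert (Hc : Rabs c <= eps).
  { apply abs_le_of_sq; [lra|].
    assert (Hd2 : (dot P u)^2 <= (17/20*eps)^2).
    { rewrite <- (pow2_abs (dot P u)). pose proof (Rabs_pos (dot P u)). nra. }
    rewrite <- Ec in Hd2. nra. }
  assert (Hc1 : -1 <= c <= 1) by nra.
  exists (acos c). split.
  - assert (P <> (0,0)).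
    { intro E. rewrite E in HP. unfold nsq in HP; simpl in HP. lra. }
    assert (u <> (0,0)).
    { intro E. rewrite E in Hu. unfold nsq in Hu; simpl in Hu. lra. }
    split; [auto|]. split; [auto|]. split.
    + pose proof (acos_bound c). pose proof PI2_3_2. lra.
    + cbv zeta. fold nP a. rewrite Hu1, Rinv_1.
      rewrite cos_acos by auto. rewrite sin_acos by auto.
      assert (E : sqrt (1 - c²) = s).
      { replace (1 - c²) with (s²) by (unfold Rsqr; nra). apply sqrt_Rsqr; lra. }
      rewrite E. unfold s, c, cross, dot, pscal. unfold nsq in Ha.
      destruct u as [u1 u2]. destruct a as [a1 a2]. cbn [fst snd] in *.
      f_equal.
      * apply Rminus_diag_uniq. transitivity (- u1 * (a1^2 + a2^2 - 1)); [ring|]. rewrite Ha; ring.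
      * apply Rminus_diag_uniq. transitivity (- u2 * (a1^2 + a2^2 - 1)); [ring|]. rewrite Ha; ring.
  - rewrite acos_asin by auto.
    replace (PI / 2 - asin c - PI / 2) with (- asin c) by ring.
    rewrite Rabs_Ropp. apply asin_small; auto.
Qed.

Theorem mainTheorem9 (eps : R) (o : pt) (Rg : pt -> Prop) :
  0 < eps <= 1 / 10 ->
  circular_domain Rg ->
  (exists r, Rg r) ->
  (forall r, Rg r -> in_square o eps r) ->
  forall p, boundary (mink_D Rg) p -> non_vertex (mink_D Rg) p ->
    (exists u, tangent_unit (mink_D Rg) p u /\ rotates_cw o p u) /\
    (forall u, tangent_unit (mink_D Rg) p u -> rotates_cw o p u ->
       exists th, is_cw_ang (psub p o) u th /\ Rabs (th - PI / 2) <= 4 * eps).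
Proof.
  intros He _ _ Hsq p Hpb Hnv.
  pose proof (P_big eps o Rg p He Hsq Hpb) as HP.
  split.
  - destruct Hnv as [u0 Hu0].
    destruct (tangent_bound eps o Rg p u0 He Hsq Hu0) as [Hn Hd].
    pose proof (lagrange (psub p o) u0) as L. rewrite Hn in L.
    assert (Hd2 : (dot (psub p o) u0)^2 <= (17/20*eps)^2).
    { rewrite <- (pow2_abs (dot (psub p o) u0)). pose proof (Rabs_pos (dot (psub p o) u0)). nra. }
    assert (Hc : cross (psub p o) u0 <> 0).
    { intro E. rewrite E in L. nra. }
    destruct (Rlt_dec (cross (psub p o) u0) 0) as [Hl|Hl].
    + exists u0. split; auto.
    + exists (pscal (-1) u0). split.
      * destruct Hu0 as [A [t [W [Hbd [Ht [Hp Hu]]]]]].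
        exists A, t. split; [auto|]. split; [auto|]. split; [auto|]. split; [auto|].
        destruct Hu as [-> | ->]; [right; reflexivity|left].
        unfold pscal; cbn [fst snd]. destruct (arc_dir A t); cbn [fst snd]. f_equal; ring.
      * unfold rotates_cw. replace (cross (psub p o) (pscal (-1) u0)) with (- cross (psub p o) u0)
          by (unfold cross, pscal; cbn [fst snd]; ring).
        lra.
  - intros u Hu Hrot.
    destruct (tangent_bound eps o Rg p u He Hsq Hu) as [Hn Hd].
    apply angle; auto.
Qed.
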